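(* Let $\bm X$ be an integrable random vector in $\mathbb{R}^d$, and let $\bm Y_1,\ldots,\bm Y_k\in\mathbb{R}^m$ be observations that are conditionally i.i.d. given $\bm X$ with a common conditional density $f_{\bm Y|\bm X}$, i.e. the joint density factorizes as $f_{\bm X}(\bm x)\prod_{i=1}^k f_{\bm Y|\bm X}(\bm y_i|\bm x)$. Let $\bm Y$ denote a generic observation with $(\bm X,\bm Y)$ having density $f_{\bm X}(\bm x)f_{\bm Y|\bm X}(\bm y|\bm x)$, let $g(\bm y)=\mathbb{E}[\bm X\mid\bm Y=\bm y]$, and set $W=\|\bm X-g(\bm Y)\|_2^2$. Define \[ D_2(k)=\mathbb{E}\!\left[\min_{1\le i\le k}\|\bm X-g(\bm Y_i)\|_2^2\right]. \] Assume there are constants $C>0$, $\alpha>0$, $a_0>0$ such that $\mathbb{P}(W\le a)\le Ca^\alpha$ for all $a\in[0,a_0]$. Then for every $k$ such that \[ a^\star\triangleq\left(\frac{1}{C(1+\alpha k)}\right)^{1/\alpha}\le a_0, \] we have \[ D_2(k)\ge e^{-1/\alpha}\left(\frac{1}{C(1+\alpha k)}\right)^{1/\alpha}. \] In particular, $D_2(k)=\Omega(k^{-1/\alpha})$ as $k\to\infty$.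
   Context: $g$ is the single-agent MMSE estimator (conditional expectation), applied by each of the $k$ agents to its own observation. $f=\Omega(h)$ means $f(k)\ge c\,h(k)$ for some constant $c>0$ and all sufficiently large $k$. *)

(* Defs.v *)
From HB Require Import structures.
From mathcomp Require Import all_boot all_order all_algebra.
From mathcomp Require Import all_classical all_reals all_analysis.
Set Implicit Arguments. Unset Strict Implicit. Unset Printing Implicit Defensive.
Import Order.TTheory GRing.Theory Num.Theory.
Import numFieldNormedType.Exports.
Local Open Scope classical_set_scope.
Local Open Scope ring_scope.

(* R^n is represented by n.-tuple R, equipped by the library with the product
   (= Borel) sigma-algebra generated by the coordinate projections. *)

Definition sqdist (R : realType) (n : nat) (x y : n.-tuple R) : R :=
  \sum_(j < n) (tnth x j - tnth y j) ^+ 2.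

Section defs.
Context (R : realType) (dO : measure_display) (Omega : measurableType dO)
  (P : probability Omega R) (d m : nat).

(* Joint-density factorization: for every k, the vector (X, Y_0, ..., Y_{k-1})
   has joint density fX(x) * prod_{i<k} fY(y_i | x) w.r.t. lX (x) lY^k;
   stated on measurable rectangles (which determine the joint law). *)
Definition cond_iid_density (X : Omega -> d.-tuple R) (Y : nat -> Omega -> m.-tuple R)
  (lX : {measure set (d.-tuple R) -> \bar R}) (lY : {measure set (m.-tuple R) -> \bar R})
  (fX : d.-tuple R -> R) (fY : m.-tuple R -> d.-tuple R -> R) : Prop :=
  forall (k : nat) (A : set (d.-tuple R)) (B : 'I_k -> set (m.-tuple R)),
    measurable A -> (forall i, measurable (B i)) ->
    P [set w | A (X w) /\ forall i : 'I_k, B i (Y i w)] =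
    (\int[lX]_(x in A) ((fX x)%:E *
        \big[*%E/1%E]_(i < k) \int[lY]_(y in B i) (fY y x)%:E))%E.

Definition pair_density (X : Omega -> d.-tuple R) (Y : Omega -> m.-tuple R)
  (lX : {measure set (d.-tuple R) -> \bar R}) (lY : {measure set (m.-tuple R) -> \bar R})
  (fX : d.-tuple R -> R) (fY : m.-tuple R -> d.-tuple R -> R) : Prop :=
  forall (A : set (d.-tuple R)) (B : set (m.-tuple R)),
    measurable A -> measurable B ->
    P [set w | A (X w) /\ B (Y w)] =
    (\int[lX]_(x in A) ((fX x)%:E * \int[lY]_(y in B) (fY y x)%:E))%E.

Definition is_cond_exp_fun (X : Omega -> d.-tuple R) (Y : Omega -> m.-tuple R)
  (g : m.-tuple R -> d.-tuple R) : Prop :=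
  measurable_fun [set: m.-tuple R] g /\
  (forall j : 'I_d, P.-integrable [set: Omega] (fun w => (tnth (g (Y w)) j)%:E)) /\
  (forall (B : set (m.-tuple R)) (j : 'I_d), measurable B ->
     (\int[P]_(w in Y @^-1` B) (tnth (X w) j)%:E =
      \int[P]_(w in Y @^-1` B) (tnth (g (Y w)) j)%:E)%E).

(* D_2(k) = E[ min_{1<=i<=k} ||X - g(Y_i)||^2 ]  (agents indexed 0..k-1) *)
Definition D2 (X : Omega -> d.-tuple R) (Y : nat -> Omega -> m.-tuple R)
  (g : m.-tuple R -> d.-tuple R) (k : nat) : \bar R :=
  (\int[P]_w \big[Order.min/+oo]_(i < k) (sqdist (X w) (g (Y i w)))%:E)%E.

End defs.

(* Main.v *)
Require Import Defs.
From HB Require Import structures.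
From mathcomp Require Import all_boot all_order all_algebra.
From mathcomp Require Import all_classical all_reals all_analysis measurable_realfun.
From mathcomp Require Import ring lra.
Import Order.TTheory GRing.Theory Num.Theory.
Import numFieldNormedType.Exports.
Local Open Scope classical_set_scope.
Local Open Scope ring_scope.

Definition mypf d1 d2 (T1 : measurableType d1) (T2 : measurableType d2) (R : realType)
  (m : set T1 -> \bar R) (f : T1 -> T2) : set T2 -> \bar R := fun A => m (f @^-1` A).
Arguments mypf {d1 d2 T1 T2 R}.

Lemma pf_meas d1 d2 (T1 : measurableType d1) (T2 : measurableType d2) (R : realType)
  (m : {measure set T1 -> \bar R}) (f : T1 -> T2) (mf : measurable_fun setT f) :
  {mu : {measure set T2 -> \bar R} | forall A, mu A = m (f @^-1` A)}.
Proof.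
have p0 : mypf m f set0 = 0%E by rewrite /mypf preimage_set0 measure0.
have p1 A : (0 <= mypf m f A)%E by rewrite /mypf; apply: measure_ge0.
have p2 : semi_sigma_additive (mypf m f).
  move=> F mF tF mUF; rewrite /mypf preimage_bigcup.
  apply: measure_semi_sigma_additive.
  - by move=> n; rewrite -[X in measurable X]setTI; exact: mf.
  - apply/trivIsetP => /= i j _ _ ij; rewrite -preimage_setI.
    by move/trivIsetP : tF => /(_ _ _ _ _ ij) ->//; rewrite preimage_set0.
  - by rewrite -preimage_bigcup -[X in measurable X]setTI; exact: mf.
by exists (HB.pack_for (measure T2 R) (mypf m f) (isMeasure.Build _ _ _ (mypf m f) p0 p1 p2)).
Qed.

Section main.
Context (R : realType) (d m : nat).
Local Notation D := (d.-tuple R).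
Local Notation M := (m.-tuple R).
Local Notation DM := (d.-tuple R * m.-tuple R)%type.
Variables (lX : {measure set D -> \bar R}) (lY : {measure set M -> \bar R}).
Hypothesis sX : sigma_finite [set: D] lX.
Hypothesis sY : sigma_finite [set: M] lY.
Definition lXs : set D -> \bar R := lX.
HB.instance Definition _ := Measure.on lXs.
HB.instance Definition _ := @Measure_isSigmaFinite.Build _ _ _ lXs sX.
Definition lYs : set M -> \bar R := lY.
HB.instance Definition _ := Measure.on lYs.
HB.instance Definition _ := @Measure_isSigmaFinite.Build _ _ _ lYs sY.

Variable fY : M -> D -> R.
Hypothesis mfY : measurable_fun [set: M * D] (fun p => fY p.1 p.2).
Hypothesis fY0 : forall y x, 0 <= fY y x.
Hypothesis fY1 : forall x, (\int[lY]_y (fY y x)%:E = 1)%E.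

Definition FY (z : DM) : \bar R := (fY z.2 z.1)%:E.

Lemma mFY : measurable_fun [set: DM] FY.
Proof.
apply/measurable_EFinP.
have -> : (fun z : DM => fY z.2 z.1) = (fun p => fY p.1 p.2) \o (fun z : DM => (z.2, z.1)) by [].
apply: measurableT_comp => //; exact: measurable_fun_pair.
Qed.

Lemma FY0 z : (0 <= FY z)%E. Proof. by rewrite lee_fin. Qed.

Definition phi (T : set DM) (x : D) : \bar R := (\int[lYs]_y (FY \_ T) (x, y))%E.

Lemma mFYT T : measurable T -> measurable_fun [set: DM] (FY \_ T).
Proof. by move=> mT; apply/(measurable_restrictT _ _).1 => //; exact: measurable_funS mFY. Qed.

Lemma FYT0 T z : (0 <= (FY \_ T) z)%E.
Proof. by rewrite patchE; case: ifP => // _; exact: FY0. Qed.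

Lemma phi_ge0 T x : (0 <= phi T x)%E.
Proof. by apply: integral_ge0 => y _; exact: FYT0. Qed.

Lemma phi_le1 T x : measurable T -> (phi T x <= 1)%E.
Proof.
move=> mT; rewrite -(fY1 x) /phi.
apply: ge0_le_integral => //.
- by move=> y _; exact: FYT0.
- by apply: (measurable_fun_pair2 (f:=FY \_ T)); exact: mFYT.
- by apply/measurable_EFinP; exact: (measurable_fun_pair1 (f := fun p => fY p.1 p.2)).
- by move=> y _; rewrite patchE; case: ifP => _ //; rewrite lee_fin.
Qed.

Lemma phi_meas T : measurable T -> measurable_fun [set: D] (phi T).
Proof.
move=> mT; apply: (@measurable_fun_fubini_tonelli_F _ _ _ _ _ lYs (FY \_ T)).
- exact: mFYT.
- exact: FYT0.
Qed.

Lemma phi_rect A B x : phi (A `*` B) x = ((\1_A x)%:E * phi (setT `*` B) x)%E.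
Proof.
rewrite /phi indicE; have [xA|xA] := boolP (x \in A).
  rewrite (_ : true%:R = 1 :> R)// mul1e; apply: eq_integral => y _.
  by rewrite !patchE !in_setX /= xA in_setT.
rewrite (_ : false%:R = 0 :> R)// mul0e; apply: integral0_eq => y _.
by rewrite patchE in_setX /= (negbTE xA).
Qed.

Lemma phi_setTX B x : phi (setT `*` B) x = (\int[lYs]_(y in B) (fY y x)%:E)%E.
Proof.
rewrite /phi [RHS]integral_mkcond; apply: eq_integral => y _.
by rewrite !patchE in_setX /= in_setT.
Qed.

Local Open Scope ereal_scope.

Definition nu (h : D -> \bar R) (T : set DM) : \bar R :=
  \int[lXs \x lYs]_(z in T) (h z.1 * FY z).

Lemma mG h : measurable_fun setT h -> measurable_fun [set: DM] (fun z => h z.1 * FY z).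
Proof.
move=> mh; apply: emeasurable_funM; last exact: mFY.
exact: measurableT_comp.
Qed.

Lemma G0 h : (forall x, 0 <= h x) -> forall z : DM, 0 <= h z.1 * FY z.
Proof. by move=> h0 z; apply: mule_ge0 => //; exact: FY0. Qed.

Lemma nu_meas h : measurable_fun setT h -> (forall x, 0 <= h x) ->
  {mu : {measure set DM -> \bar R} | forall T, mu T = nu h T}.
Proof.
move=> mh h0.
have p0 : nu h set0 = 0 by rewrite /nu integral_set0.
have p1 A : 0 <= nu h A by apply: integral_ge0 => z _; exact: G0.
have p2 : semi_sigma_additive (nu h).
  move=> F mF tF mUF; rewrite /nu ge0_integral_bigcup //.
  - by apply: is_cvg_nneseries => n _ _; exact: p1.
  - by apply: (measurable_funS measurableT) => //; exact: mG.
  - by move=> z _; exact: G0.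
by exists (HB.pack_for (measure DM R) (nu h) (isMeasure.Build _ _ _ (nu h) p0 p1 p2)).
Qed.

Lemma nuE h : measurable_fun setT h -> (forall x, 0 <= h x) ->
  forall T, measurable T -> nu h T = \int[lXs]_x (h x * phi T x).
Proof.
move=> mh h0 T mT; rewrite /nu integral_mkcond fubini_tonelli1 /fubini_F.
- apply: eq_integral => x _; rewrite /phi -ge0_integralZl//.
  + apply: eq_integral => y _; rewrite !patchE; case: ifP => _ //=; by rewrite mule0.
  + by apply: (measurable_fun_pair2 (f:=FY \_ T)); exact: mFYT.
  + by move=> y _; exact: FYT0.
- by apply/(measurable_restrictT _ _).1 => //; apply: (measurable_funS measurableT) => //; exact: mG.
- by move=> z; rewrite patchE; case: ifP => _ //; exact: G0.
Qed.

Lemma GU (mu : {measure set DM -> \bar R}) (h : D -> \bar R) :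
  measurable_fun setT h -> (forall x, 0 <= h x) -> mu setT < +oo ->
  (forall A B, measurable A -> measurable B ->
     mu (A `*` B) = \int[lXs]_x (((\1_A x)%:E * h x) * phi (setT `*` B) x)) ->
  forall T, measurable T -> mu T = \int[lXs]_x (h x * phi T x).
Proof.
move=> mh h0 muoo hAB T mT.
have [nuM nuME] := @nu_meas h mh h0.
rewrite -(@nuE h mh h0 T mT) -nuME.
apply: (measure_unique [set A `*` B | A in measurable & B in measurable] (fun _ => setT)) => //.
- exact: measurable_prod_measurableType.
- move=> _ _ [A1 mA1 [B1 mB1 <-]] [A2 mA2 [B2 mB2 <-]]; rewrite -setXI.
  by exists (A1 `&` A2); [exact: measurableI|exists (B1 `&` B2) => //; exact: measurableI].
- by move=> _; rewrite -setXTT; exists setT => //; exists setT.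
- by rewrite bigcup_const //; exists 0%N.
- move=> _ [A mA [B mB <-]]; rewrite hAB // nuME (@nuE h mh h0); last exact: measurableX.
  by apply: eq_integral => x _; rewrite [in RHS]phi_rect muleCA muleA.
Qed.


Variables (dO : measure_display) (Omega : measurableType dO) (P : probability Omega R).
Variables (X : Omega -> D) (Y : nat -> Omega -> M) (fX : D -> R).
Hypothesis mX : measurable_fun [set: Omega] X.
Hypothesis mY : forall i, measurable_fun [set: Omega] (Y i).
Hypothesis mfX : measurable_fun [set: D] fX.
Hypothesis fX0 : forall x, (0 <= fX x)%R.
Hypothesis hiid : cond_iid_density P X Y lX lY fX fY.

Definition Ev (A : set D) k (T : 'I_k -> set DM) : set Omega :=
  [set w | A (X w) /\ forall i : 'I_k, T i (X w, Y i w)].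
Definition RHS (A : set D) k (T : 'I_k -> set DM) : \bar R :=
  \int[lXs]_(x in A) ((fX x)%:E * \big[*%E/1%E]_(i < k) phi (T i) x).
Definition upd k (T : 'I_k -> set DM) (i0 : 'I_k) (U : set DM) : 'I_k -> set DM :=
  fun i => if i == i0 then U else T i.
Definition hh (A : set D) k (T : 'I_k -> set DM) (i0 : 'I_k) (x : D) : \bar R :=
  (\1_A x)%:E * ((fX x)%:E * \big[*%E/1%E]_(i < k | i != i0) phi (T i) x).
Arguments Ev A {k}.
Arguments RHS A {k}.
Arguments upd {k}.
Arguments hh A {k}.

Lemma updK k (T : 'I_k -> set DM) i0 : upd T i0 (T i0) = T.
Proof. by apply/funext => i; rewrite /upd; case: eqP => // ->. Qed.

Lemma RHSE A k (T : 'I_k -> set DM) i0 U :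
  RHS A (upd T i0 U) = \int[lXs]_x (hh A T i0 x * phi U x).
Proof.
rewrite /RHS integral_mkcond; apply: eq_integral => x _; rewrite patchE /hh indicE.
case: (boolP (x \in A)) => xA.
  rewrite (_ : true%:R = 1%R :> R)// mul1e (bigD1 i0) //= /upd eqxx.
  rewrite (eq_bigr (fun i => phi (T i) x)); last by move=> i /negbTE ->.
  by rewrite muleCA [LHS]muleC.
by rewrite (_ : false%:R = 0%R :> R)// !mul0e.
Qed.

Lemma hhI A A' k (T : 'I_k -> set DM) i0 x :
  hh (A `&` A') T i0 x = (\1_A' x)%:E * hh A T i0 x.
Proof. by rewrite /hh indicI /= EFinM [X in X * _ = _]muleC -muleA. Qed.

Lemma hh_upd A k (T : 'I_k -> set DM) i0 U : hh A (upd T i0 U) i0 = hh A T i0.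
Proof.
apply/funext => x; rewrite /hh; congr (_ * (_ * _)).
by apply: eq_bigr => i /negbTE; rewrite /upd => ->.
Qed.

Lemma emeas_prod (I : Type) (s : seq I) (Pr : pred I) (F : I -> D -> \bar R) :
  (forall i, measurable_fun [set: D] (F i)) ->
  measurable_fun [set: D] (fun x => \big[*%E/1%E]_(i <- s | Pr i) F i x).
Proof.
move=> mF; elim: s => [|a s IH].
  by under eq_fun do rewrite big_nil; exact: measurable_cst.
under eq_fun do rewrite big_cons.
case: (Pr a) => //; exact: emeasurable_funM.
Qed.

Lemma hh_meas A k (T : 'I_k -> set DM) i0 : measurable A -> (forall i, measurable (T i)) ->
  measurable_fun [set: D] (hh A T i0).
Proof.
move=> mA mT; apply: emeasurable_funM.
  by apply/measurable_EFinP; exact: measurable_indic.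
apply: emeasurable_funM; first exact/measurable_EFinP.
by apply: emeas_prod => i; exact: phi_meas.
Qed.

Lemma hh_ge0 A k (T : 'I_k -> set DM) i0 x : 0 <= hh A T i0 x.
Proof.
rewrite /hh; apply: mule_ge0; first by rewrite lee_fin.
apply: mule_ge0; first by rewrite lee_fin.
by apply: prode_ge0 => i _; exact: phi_ge0.
Qed.

Lemma mpre i (T : set DM) : measurable T -> measurable ((fun w => (X w, Y i w)) @^-1` T).
Proof.
move=> mT; rewrite -[X in measurable X]setTI.
exact: (measurable_fun_pair mX (mY i)).
Qed.

Lemma meas_forall k (G : 'I_k -> set Omega) : (forall i, measurable (G i)) ->
  measurable [set w | forall i, G i w].
Proof.
move=> mG; have -> : [set w | forall i, G i w] = \bigcap_(i in [set: 'I_k]) G i.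
  by apply/seteqP; split => w /= H i //; exact: H.
by apply: fin_bigcap_measurable => //; exact: finite_finset.
Qed.

Lemma mEv A k (T : 'I_k -> set DM) : measurable A -> (forall i, measurable (T i)) ->
  measurable (Ev A T).
Proof.
move=> mA mT; have -> : Ev A T = (X @^-1` A) `&` [set w | forall i, T i (X w, Y i w)] by [].
apply: measurableI; first by rewrite -[X in measurable X]setTI; exact: mX.
apply: meas_forall => i; exact: mpre.
Qed.

Arguments updK {k}.
Arguments RHSE A {k}.
Arguments hhI A A' {k}.
Arguments hh_upd A {k}.

Lemma claim k j : (j <= k)%N -> forall (A : set D) (T : 'I_k -> set DM),
  measurable A -> (forall i, measurable (T i)) ->
  (forall i : 'I_k, (j <= i)%N -> exists2 B, measurable B & T i = setT `*` B) ->
  P (Ev A T) = RHS A T.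
Proof.
elim: j => [|j IH] jk A T mA mT rT.
  pose x0 : D := [tuple (0%R : R) | i < d].
  pose B i := [set y | T i (x0, y)].
  have TB i : measurable (B i) /\ T i = setT `*` B i.
    have [B' mB' TiB'] := rT i (leq0n _).
    have -> : B i = B' by rewrite /B TiB'; apply/seteqP; split => y /=; [case|split].
    by [].
  have -> : Ev A T = [set w | A (X w) /\ forall i, B i (Y i w)].
    apply/seteqP; split => w [Aw H]; split => // i; move: (H i); rewrite (TB i).2 //=.
    by move=> [].
  rewrite hiid //; last by move=> i; exact: (TB i).1.
  rewrite /RHS; apply: eq_integral => x _; congr (_ * _).
  by apply: eq_bigr => i _; rewrite (TB i).2 phi_setTX.
have jk' : (j < k)%N by [].
pose i0 : 'I_k := Ordinal jk'.
pose E := [set w | A (X w) /\ forall i, i != i0 -> T i (X w, Y i w)].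
have mE : measurable E.
  have -> : E = (X @^-1` A) `&` [set w | forall i, [set w | i != i0 -> T i (X w, Y i w)] w] by [].
  apply: measurableI; first by rewrite -[X in measurable X]setTI; exact: mX.
  apply: meas_forall => i; case: (i != i0).
    have -> : [set w | true -> T i (X w, Y i w)] = (fun w => (X w, Y i w)) @^-1` T i.
      by apply/seteqP; split => w /=; [exact|move=> ? _].
    exact: mpre.
  have -> : [set w | false -> T i (X w, Y i w)] = setT by apply/seteqP; split => w.
  exact: measurableT.
have mf : measurable_fun [set: Omega] (fun w => (X w, Y i0 w)) by exact: measurable_fun_pair.
have [mu muE] := @pf_meas _ _ _ _ _ (mrestr P mE) _ mf.
have muEv U : mu U = P (Ev A (upd T i0 U)).
  rewrite muE /mrestr; congr (P _); apply/seteqP; split => w /=.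
    move=> [Uw [Aw H]]; split => // i; rewrite /upd; case: eqP => [->//|/eqP]; exact: H.
  move=> [Aw H]; split; first by have := H i0; rewrite /upd eqxx.
  split => // i /negbTE ii0; have := H i; by rewrite /upd ii0.
have -> : P (Ev A T) = mu (T i0) by rewrite muEv updK.
have -> : RHS A T = \int[lXs]_x (hh A T i0 x * phi (T i0) x) by rewrite -RHSE updK.
apply: GU.
- exact: hh_meas.
- exact: hh_ge0.
- rewrite muE /mrestr; apply: (le_lt_trans (probability_le1 _ _)); last exact: ltry.
  by apply: measurableI => //; exact: mpre.
- move=> A' B' mA' mB'.
  have -> : mu (A' `*` B') = P (Ev (A `&` A') (upd T i0 (setT `*` B'))).
    rewrite muEv; congr (P _); apply/seteqP; split => w /= [Aw H].
      split; first by split => //; have := H i0; rewrite /upd eqxx => -[].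
      move=> i; have := H i; rewrite /upd; case: eqP => // _ [_ ?]; by split.
    split; first by move: Aw => [].
    move=> i; have := H i; rewrite /upd; case: eqP => // _ [_ ?]; split => //; by case: Aw.
  rewrite IH //.
  + rewrite RHSE; apply: eq_integral => x _; by rewrite hhI.
  + exact: ltnW.
  + exact: measurableI.
  + by move=> i; rewrite /upd; case: eqP => _ //; exact: measurableX.
  + move=> i ji; rewrite /upd; case: eqP => [_|/eqP ii0]; first by exists B'.
    apply: rT; rewrite ltn_neqAle ji andbT; apply: contra ii0 => /eqP ji'.
    by apply/eqP/val_inj; rewrite /= ji'.
- exact: mT.
Qed.

Lemma intfX : \int[lXs]_x (fX x)%:E = 1.
Proof.
have := hiid 0%N setT (fun i : 'I_0 => setT) measurableT (fun _ => measurableT).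
have -> : [set w | setT (X w) /\ forall i : 'I_0, setT (Y i w)] = setT.
  by apply/seteqP; split => w // _; split => // -[].
rewrite probability_setT => ->; apply: eq_integral => x _.
by rewrite big_ord0 mule1.
Qed.

Lemma pairE (Yg : Omega -> M) : measurable_fun setT Yg ->
  pair_density P X Yg lX lY fX fY ->
  forall S, measurable S ->
  P ((fun w => (X w, Yg w)) @^-1` S) = \int[lXs]_x ((fX x)%:E * phi S x).
Proof.
move=> mYg hp S mS.
have mf : measurable_fun [set: Omega] (fun w => (X w, Yg w)) by exact: measurable_fun_pair.
have [mu muE] := @pf_meas _ _ _ _ _ P _ mf.
rewrite -muE; apply: GU; last exact: mS.
- exact/measurable_EFinP.
- by move=> x; rewrite lee_fin.
- rewrite muE preimage_setT; apply: (le_lt_trans (probability_le1 P measurableT)); exact: ltry.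
- move=> A B mA mB; rewrite muE.
  transitivity (P [set w | A (X w) /\ B (Yg w)]); first by [].
  rewrite hp // integral_mkcond; apply: eq_integral => x _.
  rewrite patchE indicE phi_setTX; case: (boolP (x \in A)) => _.
    by rewrite (_ : true%:R = 1%R :> R)// mul1e.
  by rewrite (_ : false%:R = 0%R :> R)// !mul0e.
Qed.

Lemma sqdist_ge0 (x : D) (y : D) : (0 <= sqdist x y)%R.
Proof. by apply: sumr_ge0 => j _; exact: sqr_ge0. Qed.

Lemma msq (g : M -> D) : measurable_fun setT g ->
  measurable_fun [set: DM] (fun z => sqdist z.1 (g z.2)).
Proof.
move=> mg; rewrite /sqdist; apply: measurable_sum => j.
apply: measurable_funX; apply: measurable_funB.
  exact: measurableT_comp (measurable_tnth j) measurable_fst.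
exact: measurableT_comp (measurable_tnth j) (measurableT_comp mg measurable_snd).
Qed.

Lemma mbigmin k (F : nat -> Omega -> \bar R) : (forall i, measurable_fun setT (F i)) ->
  measurable_fun [set: Omega] (fun w => \big[Order.min/+oo]_(i < k) F i w).
Proof.
move=> mF; elim: k => [|k IH].
  by under eq_fun do rewrite big_ord0; exact: measurable_cst.
under eq_fun do rewrite big_ord_recr /=.
exact: measurable_mine.
Qed.

Local Close Scope ereal_scope.
Lemma bern (p q : R) n : (0 <= p)%R -> (0 <= q)%R ->
  (p ^+ n.+1 + n.+1%:R * p ^+ n * (q - p) <= q ^+ n.+1)%R.
Proof.
move=> p0 q0; elim: n => [|n IH]; first by rewrite !expr1 expr0 mulr1 mul1r addrC subrK.
have b0 : (0 <= p ^+ n)%R by exact: exprn_ge0.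
have H1 : (0 <= q * (q ^+ n.+1 - (p ^+ n.+1 + n.+1%:R * p ^+ n * (q - p))))%R.
  by apply: mulr_ge0 => //; rewrite subr_ge0.
have N0 : (0 <= n.+1%:R :> R)%R by [].
have H2 : (0 <= n.+1%:R * p ^+ n * ((q - p) * (q - p)))%R.
  by apply: mulr_ge0; [exact: mulr_ge0|rewrite -expr2; exact: sqr_ge0].
rewrite (exprS q n.+1) (exprS p n.+1) (exprS p n) (mulrSr 1 n.+1).
move: H1 H2 N0 b0; rewrite (exprS p n).
move: (p ^+ n) (q ^+ n.+1) (n.+1%:R : R) => b a N.
move=> H1 H2 N0 b0; nra.
Qed.
Local Open Scope ereal_scope.

Lemma intD2 (f g : D -> R) : (forall x, 0 <= f x)%R -> (forall x, 0 <= g x)%R ->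
  measurable_fun setT f -> measurable_fun setT g ->
  \int[lXs]_x ((f x)%:E + (g x)%:E) = \int[lXs]_x (f x)%:E + \int[lXs]_x (g x)%:E.
Proof.
move=> f0 g0 mf mg; apply: ge0_integralD => //.
- by move=> x _; rewrite lee_fin.
- exact/measurable_EFinP.
- by move=> x _; rewrite lee_fin.
- exact/measurable_EFinP.
Qed.

Lemma intZ (c : R) (f : D -> R) : (0 <= c)%R -> (forall x, 0 <= f x)%R ->
  measurable_fun setT f ->
  \int[lXs]_x ((c * f x)%:E) = c%:E * \int[lXs]_x (f x)%:E.
Proof.
move=> c0 f0 mf; rewrite -ge0_integralZl//.
all: first [exact/measurable_EFinP | by move=> x _; rewrite lee_fin | by rewrite lee_fin].
Qed.

Lemma key (g : M -> D) (mg : measurable_fun setT g) (Yg : Omega -> M)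
  (mYg : measurable_fun setT Yg) (hp : pair_density P X Yg lX lY fX fY) (a : R) (n : nat) :
  (0 <= a)%R ->
  ((fine (P [set w | (a < sqdist (X w) (g (Yg w)))%R])) ^+ n.+1 * a)%:E <= D2 P X Y g n.+1.
Proof.
move=> a0.
pose sq (z : DM) := sqdist z.1 (g z.2).
pose S := [set z : DM | (a < sq z)%R].
have mS : measurable S.
  have -> : S = sq @^-1` `]a, +oo[ by apply/seteqP; split => z /=; rewrite in_itv /= andbT.
  rewrite -[X in measurable X]setTI; exact: (@msq g mg measurableT _ (measurable_itv _)).
have pE : P [set w | (a < sqdist (X w) (g (Yg w)))%R] = \int[lXs]_x ((fX x)%:E * phi S x).
  by rewrite -(@pairE Yg mYg hp S mS).
pose q x := fine (phi S x).
have phifin x : phi S x \is a fin_num.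
  by rewrite ge0_fin_numE ?phi_ge0 // (le_lt_trans (@phi_le1 S x mS)) ?ltry.
have phiq x : phi S x = (q x)%:E by rewrite fineK.
have q0 x : (0 <= q x)%R by rewrite -lee_fin -phiq phi_ge0.
have mq : measurable_fun setT q.
  exact: measurableT_comp (fine_measurable measurableT) (@phi_meas S mS).
pose Eall := [set w | forall i : 'I_n.+1, S (X w, Y i w)].
have mEall : measurable Eall.
  by apply: meas_forall => i; exact: mpre.
have PEall : P Eall = \int[lXs]_x ((fX x * q x ^+ n.+1)%:E).
  have := @claim n.+1 n.+1 (leqnn _) setT (fun _ => S) measurableT (fun _ => mS).
  have -> : Ev setT (fun _ : 'I_n.+1 => S) = Eall.
    by apply/seteqP; split => w /=; [case|split].
  move=> ->; last by move=> i; rewrite leqNgt ltn_ord.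
  apply: eq_integral => x _; rewrite phiq.
  by rewrite prodEFin prodr_const card_ord -EFinM.
pose E2 := [set w | (a < sqdist (X w) (g (Yg w)))%R].
have PE2 : P E2 = \int[lXs]_x ((fX x * q x)%:E).
  by rewrite pE; apply: eq_integral => x _; rewrite phiq EFinM.
have PE2fin : P E2 \is a fin_num.
  rewrite ge0_fin_numE // (le_lt_trans (probability_le1 P _)) ?ltry //.
  have -> : E2 = (fun w => (X w, Yg w)) @^-1` S by [].
  rewrite -[X in measurable X]setTI; exact: (measurable_fun_pair mX mYg).
pose pr := fine (P E2).
have pr0 : (0 <= pr)%R by rewrite fine_ge0.
have PEallfin : P Eall \is a fin_num.
  by rewrite ge0_fin_numE // (le_lt_trans (probability_le1 P _)) ?ltry.
have mfq : measurable_fun [set: D] (fun x => fX x * q x)%R by exact: measurable_funM.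
have mfqn : measurable_fun [set: D] (fun x => fX x * q x ^+ n.+1)%R.
  by apply: measurable_funM => //; exact: measurable_funX.
have N0 : (0 <= n.+1%:R :> R)%R by [].
have ineq : \int[lXs]_x ((pr ^+ n.+1 * fX x)%:E + (n.+1%:R * pr ^+ n * (fX x * q x))%:E)
    <= \int[lXs]_x ((fX x * q x ^+ n.+1)%:E + (n.+1%:R * pr ^+ n.+1 * fX x)%:E).
  apply: ge0_le_integral => //.
  - move=> x _; apply: adde_ge0; rewrite lee_fin.
    + exact: mulr_ge0 (exprn_ge0 _ pr0) (fX0 x).
    + by apply: mulr_ge0; [exact: mulr_ge0 (exprn_ge0 _ pr0)|exact: mulr_ge0].
  - by apply: emeasurable_funD; apply/measurable_EFinP; apply: measurable_funM.
  - by apply: emeasurable_funD; apply/measurable_EFinP => //; apply: measurable_funM.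
  - move=> x _; rewrite -!EFinD lee_fin.
    have := @bern pr (q x) n pr0 (q0 x); have fx0 := fX0 x; have qx0 := q0 x.
    rewrite (exprS pr n).
    move: (pr ^+ n)%R (fX x) (q x) (n.+1%:R : R) fx0 qx0 N0 => b f qq N fx0 qx0 N0 H.
    have H' : (0 <= f * (qq ^+ n.+1 - (pr * b + N * b * (qq - pr))))%R.
      by apply: mulr_ge0 => //; rewrite subr_ge0.
    move: H'; move: (qq ^+ n.+1)%R => c H'.
    nra.
have fXq0 x : (0 <= fX x * q x)%R by exact: mulr_ge0.
have fXqn0 x : (0 <= fX x * q x ^+ n.+1)%R by apply: mulr_ge0 => //; exact: exprn_ge0.
rewrite (intD2 _ _ (fun x => mulr_ge0 (exprn_ge0 _ pr0) (fX0 x))) in ineq; last 3 first.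
- by move=> x; apply: mulr_ge0 => //; exact: mulr_ge0 (exprn_ge0 _ pr0).
- exact: measurable_funM.
- exact: measurable_funM.
rewrite (intD2 _ _ fXqn0) in ineq; last 3 first.
- by move=> x; apply: mulr_ge0 => //; exact: mulr_ge0 (exprn_ge0 _ pr0).
- exact: mfqn.
- exact: measurable_funM.
rewrite !intZ in ineq; cycle 1.
all: try solve [exact: mfX | exact: mfq | exact: fX0 | exact: fXq0 | exact: exprn_ge0 |
  by apply: mulr_ge0 => //; exact: exprn_ge0].
rewrite intfX -PE2 -PEall !mule1 -(fineK PE2fin) -(fineK PEallfin) -!EFinM -!EFinD lee_fin in ineq.
have main : (pr ^+ n.+1 <= fine (P Eall))%R.
  move: ineq; rewrite -/pr (exprS pr n).
  move: (pr ^+ n)%R (fine (P Eall)) (n.+1%:R : R) => b c N; lra.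
rewrite -/E2 -/pr.
apply: (@le_trans _ _ (a%:E * P Eall)).
  rewrite -(fineK PEallfin) -EFinM lee_fin; move: main; move: (pr ^+ n.+1)%R (fine (P Eall)) => u v; nra.
have -> : a%:E * P Eall = \int[P]_w (((cst a%:E) \_ Eall) w).
  by rewrite -integral_mkcond integral_cst.
rewrite /D2; apply: ge0_le_integral => //.
- by move=> w _; rewrite patchE; case: ifP => _ //; rewrite lee_fin.
- by apply/(measurable_restrictT _ _).1 => //; exact: measurable_cst.
- apply: (@mbigmin n.+1 (fun i w => (sqdist (X w) (g (Y i w)))%:E)) => i; apply/measurable_EFinP.
  exact: measurableT_comp (@msq g mg) (measurable_fun_pair mX (mY i)).
- move=> w _; rewrite patchE; case: ifPn => [/set_mem Ew|_].
    apply: le_bigmin; first exact: leey.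
    by move=> i _; rewrite lee_fin; apply/ltW; exact: (Ew i).
  apply: le_bigmin; first exact: leey.
  by move=> i _; rewrite lee_fin; exact: sqdist_ge0.
Qed.

End main.

Section numerics.
Context (R : realType).
Local Open Scope ring_scope.

Lemma powK (x a : R) : 0 <= x -> 0 < a -> (x `^ a^-1) `^ a = x.
Proof. by move=> x0 a0; rewrite -powRrM mulVf ?gt_eqF // powRr1. Qed.

Lemma powRVx (x r : R) : 0 < x -> (x^-1) `^ r = (x `^ r)^-1.
Proof.
move=> x0; have : (x * x^-1) `^ r = 1 by rewrite mulfV ?gt_eqF // powR1.
rewrite powRM ?ltW ?invr_gt0 // => H.
have hx : x `^ r != 0 by rewrite gt_eqF // powR_gt0.
by apply: (mulfI hx); rewrite H mulfV.
Qed.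

Lemma expbound (al : R) (n : nat) : 0 < al ->
  expR (- al^-1) <= (al * n.+1%:R / (1 + al * n.+1%:R)) ^+ n.+1.
Proof.
move=> al0; set k : R := n.+1%:R.
have k0 : 0 < k by rewrite ltr0n.
set u := (al * k)^-1.
have u0 : 0 < u by rewrite invr_gt0 mulr_gt0.
have E1 : al * k / (1 + al * k) = (1 + u)^-1.
  rewrite /u; field; apply/andP; split; rewrite ?gt_eqF ?mulr_gt0 //.
  by rewrite addr_gt0 // mulr_gt0.
rewrite E1 exprVn expRN lef_pV2 ?posrE ?expR_gt0 ?exprn_gt0 ?addr_gt0 //.
apply: (le_trans (lerXn2r n.+1 _ _ (expR_ge1Dx u))).
- by rewrite nnegrE addr_ge0 // ltW.
- by rewrite nnegrE expR_ge0.
rewrite -expRM_natl le_eqVlt; apply/orP; left; apply/eqP; congr expR.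
rewrite /u /k; field; apply/andP; split; rewrite gt_eqF //.
Qed.

End numerics.

Theorem theorem2 (R : realType) (dO : measure_display) (Omega : measurableType dO)
  (P : probability Omega R) (d m : nat)
  (X : Omega -> d.-tuple R) (Y : nat -> Omega -> m.-tuple R) (Yg : Omega -> m.-tuple R)
  (lX : {measure set (d.-tuple R) -> \bar R}) (lY : {measure set (m.-tuple R) -> \bar R})
  (fX : d.-tuple R -> R) (fY : m.-tuple R -> d.-tuple R -> R)
  (g : m.-tuple R -> d.-tuple R) (C alpha a0 : R) :
  sigma_finite [set: d.-tuple R] lX ->
  sigma_finite [set: m.-tuple R] lY ->
  measurable_fun [set: Omega] X ->
  (forall i, measurable_fun [set: Omega] (Y i)) ->
  measurable_fun [set: Omega] Yg ->
  (forall j : 'I_d, P.-integrable [set: Omega] (fun w => (tnth (X w) j)%:E)) ->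
  measurable_fun [set: d.-tuple R] fX ->
  (forall x, 0 <= fX x) ->
  measurable_fun [set: m.-tuple R * d.-tuple R] (fun p => fY p.1 p.2) ->
  (forall y x, 0 <= fY y x) ->
  (forall x, (\int[lY]_y (fY y x)%:E = 1)%E) ->
  cond_iid_density P X Y lX lY fX fY ->
  pair_density P X Yg lX lY fX fY ->
  is_cond_exp_fun P X Yg g ->
  0 < C -> 0 < alpha -> 0 < a0 ->
  (forall a : R, 0 <= a -> a <= a0 ->
     (P [set w | (sqdist (X w) (g (Yg w)) <= a)%R] <= (C * a `^ alpha)%:E)%E) ->
  (forall k : nat,
     (C * (1 + alpha * k%:R))^-1 `^ alpha^-1 <= a0 ->
     ((expR (- alpha^-1) * (C * (1 + alpha * k%:R))^-1 `^ alpha^-1)%:E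
        <= D2 P X Y g k)%E)
  /\
  (exists c : R, 0 < c /\ exists K : nat, forall k : nat, (K <= k)%N ->
     ((c * k%:R `^ (- alpha^-1))%:E <= D2 P X Y g k)%E).
Proof.
move=> sX sY mX mY mYg _ mfX fX0 mfY fY0 fY1 hiid hp hce C0 al0 a00 hW.
have mg := hce.1.
have part1 : forall k : nat,
     (C * (1 + alpha * k%:R))^-1 `^ alpha^-1 <= a0 ->
     ((expR (- alpha^-1) * (C * (1 + alpha * k%:R))^-1 `^ alpha^-1)%:E
        <= D2 P X Y g k)%E.
  move=> k hk.
  case: k hk => [|n] hk.
    rewrite /D2; under eq_integral do rewrite big_ord0.
    rewrite integral_cst //.
    have -> : (+oo * P [set: Omega])%E = +oo%E by rewrite probability_setT mule1.
    exact: leey.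
  set a := (C * (1 + alpha * n.+1%:R))^-1 `^ alpha^-1.
  have a0' : 0 <= a by exact: powR_ge0.
  apply: (le_trans _ (@key R d m lX lY sX sY fY mfY fY0 fY1 dO Omega P X Y fX mX mY mfX fX0 hiid g mg Yg mYg hp a n a0')).
  rewrite lee_fin; apply: ler_wpM2r => //.
  apply: (le_trans (@expbound R alpha n al0)).
  have msqw : measurable_fun setT (fun w => sqdist (X w) (g (Yg w))).
    exact: measurableT_comp (@msq R d m g mg) (measurable_fun_pair mX mYg).
  have mE1 : measurable [set w | sqdist (X w) (g (Yg w)) <= a].
    rewrite (_ : [set w | _ <= a] = (fun w => sqdist (X w) (g (Yg w))) @^-1` `]-oo, a]).
      by rewrite -[X in measurable X]setTI; exact: (msqw measurableT _ (measurable_itv _)).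
    by apply/seteqP; split => w /=; rewrite in_itv.
  have E2E : [set w | a < sqdist (X w) (g (Yg w))] = ~` [set w | sqdist (X w) (g (Yg w)) <= a].
    by apply/seteqP; split => w /=; rewrite ltNge => /negP.
  rewrite E2E probability_setC //.
  have hPE1 := hW a a0' hk.
  have fin1 : P [set w | sqdist (X w) (g (Yg w)) <= a] \is a fin_num.
    by rewrite ge0_fin_numE // (le_lt_trans (probability_le1 P mE1)) ?ltry.
  rewrite -(fineK fin1) -EFinB /=.
  rewrite -(fineK fin1) lee_fin /a powK in hPE1; last 2 first.
  - rewrite invr_ge0; apply: mulr_ge0; first exact: ltW.
    by apply: addr_ge0 => //; apply: mulr_ge0 => //; exact: ltW.
  - exact: al0.
  have p10 : 0 <= fine (P [set w | sqdist (X w) (g (Yg w)) <= a]) by rewrite fine_ge0.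
  have kpos : 0 < alpha * n.+1%:R by rewrite mulr_gt0 // ltr0n.
  have tE : alpha * n.+1%:R / (1 + alpha * n.+1%:R) = 1 - C * (C * (1 + alpha * n.+1%:R))^-1.
    have y0 : 0 < 1 + alpha * n.+1%:R by rewrite addr_gt0.
    rewrite invfM mulrA mulfV ?gt_eqF // mul1r.
    by field; rewrite nat1r (gt_eqF y0).
  have t0 : 0 <= alpha * n.+1%:R / (1 + alpha * n.+1%:R).
    by rewrite divr_ge0 // ltW // addr_gt0.
  apply: (@lerXn2r _ n.+1); rewrite ?nnegrE //.
  - by move: hPE1 t0; rewrite tE; lra.
  - by move: hPE1; rewrite tE; lra.
have [K hK] : exists K : nat, (1 <= K)%N /\ (alpha * C * a0 `^ alpha)^-1 < K%:R.
  exists (Num.trunc ((alpha * C * a0 `^ alpha)^-1)).+1; split => //.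
  exact: truncnS_gt.
split => //.
have be0 : 0 <= alpha^-1 by rewrite invr_ge0 ltW.
set s := a0 `^ alpha.
have s0 : 0 < s by rewrite powR_gt0.
exists (expR (- alpha^-1) * (C * (1 + alpha))^-1 `^ alpha^-1); split.
  by rewrite mulr_gt0 ?expR_gt0 // powR_gt0 // invr_gt0 mulr_gt0 // addr_gt0.
exists K => k Kk.
have k1 : (1 <= k)%N by apply: leq_trans Kk; case: hK.
have k0 : 0 < k%:R :> R by rewrite ltr0n.
have kge1 : 1 <= k%:R :> R by rewrite ler1n.
have Ck0 : 0 < C * (1 + alpha * k%:R) by rewrite mulr_gt0 // addr_gt0 // mulr_gt0.
apply: le_trans (part1 k _); last first.
  have -> : a0 = s `^ alpha^-1 by rewrite /s -powRrM mulfV ?gt_eqF // powRr1 // ltW.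
  apply: ge0_ler_powR => //; rewrite ?nnegrE ?invr_ge0 ?ltW //.
  have aCs0 : 0 < alpha * C * s by rewrite !mulr_gt0.
  have h1 : (alpha * C * s)^-1 < k%:R by apply: (lt_le_trans hK.2); rewrite ler_nat.
  have h2 : alpha * C * s * (alpha * C * s)^-1 < alpha * C * s * k%:R by rewrite ltr_pM2l.
  rewrite mulfV ?gt_eqF // in h2.
  rewrite -(invrK s) ltf_pV2 ?posrE ?invr_gt0 //.
  rewrite -(ltr_pM2l s0) mulfV ?gt_eqF //.
  have hsC : 0 <= s * C by rewrite mulr_ge0 // ltW.
  move: h2 hsC; lra.
rewrite lee_fin -mulrA ler_wpM2l ?expR_ge0 //.
have A0 : 0 < (C * (1 + alpha))^-1 by rewrite invr_gt0 mulr_gt0 // addr_gt0.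
have kI0 : 0 < k%:R^-1 :> R by rewrite invr_gt0.
rewrite powRN -powRVx // -(powRM _ (ltW A0) (ltW kI0)).
apply: ge0_ler_powR => //; rewrite ?nnegrE.
- exact: ltW (mulr_gt0 A0 kI0).
- by apply: ltW; rewrite invr_gt0.
have CAk : 0 < C * (1 + alpha) * k%:R by rewrite mulr_gt0 // mulr_gt0 // addr_gt0.
rewrite -invfM lef_pV2 ?posrE //.
have hC : C <= C * k%:R by rewrite ler_peMr // ltW.
move: hC; lra.
Qed.
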